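(* Let $\delta_\ell=94/194$. Let $H$ be a $3$-regular graph on $n>4$ nodes every independent set of which has at most $\delta_\ell n$ nodes, and let $G$ be the complement of $H$ (an $(n-4)$-regular graph). Then $$\mathsf{OPT}(G)\le\frac{4\delta_\ell-1}{n-4},$$ where the maximum is over clusterings with any number of clusters.
   Context: For a finite simple undirected graph $G=(V,E)$ with $m=|E|\ge1$ edges, degrees $d_v$, and $a_{u,v}=1$ if $\{u,v\}\in E$ and $0$ otherwise: for $C\subseteq V$, $\mathsf M(C)=\frac{1}{2m}\sum_{u\in C}\sum_{v\in C}\big(a_{u,v}-\frac{d_ud_v}{2m}\big)$ (ordered pairs, including $u=v$). A clustering is a partition $\mathcal S$ of $V$ into nonempty clusters, with $\mathsf M(\mathcal S)=\sum_{C\in\mathcal S}\mathsf M(C)$; $\mathsf{OPT}(G)$ is the maximum of $\mathsf M(\mathcal S)$ over all clusterings. *)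

(* Defs.v *)
From HB Require Import structures.
From mathcomp Require Import all_boot all_order all_algebra.
Set Implicit Arguments. Unset Strict Implicit. Unset Printing Implicit Defensive.
Import Order.TTheory GRing.Theory Num.Theory.
Local Open Scope ring_scope.

Definition simple_graph (T : finType) (g : rel T) : Prop :=
  symmetric g /\ irreflexive g.

Definition deg (T : finType) (g : rel T) (v : T) : nat := #|[set u | g v u]|.

Definition edges (T : finType) (g : rel T) : {set {set T}} :=
  [set E : {set T} | [exists x, exists y, g x y && (E == [set x; y])]].

Definition nedges (T : finType) (g : rel T) : nat := #|edges g|.

Definition adj (T : finType) (g : rel T) (u v : T) : rat := (g u v)%:R.

Definition mod_cluster (T : finType) (g : rel T) (C : {set T}) : rat :=
  let m2 : rat := (2 * nedges g)%:R in
  m2^-1 * \sum_(u in C) \sum_(v in C)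
            (adj g u v - (deg g u)%:R * (deg g v)%:R / m2).

Definition modularity (T : finType) (g : rel T) (S : {set {set T}}) : rat :=
  \sum_(C in S) mod_cluster g C.

Definition clustering (T : finType) (S : {set {set T}}) : bool :=
  partition S [set: T].

Definition independent (T : finType) (g : rel T) (A : {set T}) : bool :=
  [forall x in A, forall y in A, ~~ g x y].

Definition compl_graph (T : finType) (g : rel T) : rel T :=
  fun x y => (x != y) && ~~ g x y.

Definition delta_l : rat := 94%:R / 194%:R.

(* Main.v *)
Require Import Defs.
From Stdlib Require Import Lia.
Lemma core_ineq (k r P Q : nat) :
  97*(2*k) <= 94*(k+r) + 97*P ->
  97*(2*r) <= 94*(k+r) + 97*Q ->
  P + 3*r = 3*k + Q ->
  388*k*k <= 188*k*(k+r) + 97*(k+r)*P.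
Proof.
intros H1 H2 H3.
destruct (PeanoNat.Nat.le_gt_cases (97*k) (47*(k+r))) as [Ha|Ha].
- nia.
- destruct (PeanoNat.Nat.le_gt_cases k r) as [Hb|Hb].
  + nia.
  + destruct (PeanoNat.Nat.le_gt_cases (2*97*k) (191*(k+r))) as [Hc|Hc]; nia.
Qed.

Lemma nat_step (X k P n d : nat) : X + k + P = k*k -> d + 4 = n ->
  388*k*k <= 188*k*n + 97*n*P ->
  194*X*(n*d) <= 182*k*(n*d) + 194*(k*k)*(d*d).
Proof.
intros H1 H2 H3.
assert (E : (X + k + P)*(n*d) = k*k*(n*d)) by (rewrite H1; reflexivity).
assert (H4 : (388*k*k)*(2*d) <= (188*k*n + 97*n*P)*(2*d)) by (apply PeanoNat.Nat.mul_le_mono_r; exact H3).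
subst n. nia.
Qed.

From HB Require Import structures.
From mathcomp Require Import all_boot all_order all_algebra.
From Stdlib Require Import Lia.
Set Warnings "-all".
Lemma deg_sum (T : finType) (g : rel T) (u : T) : deg g u = \sum_v g u v.
Proof.
rewrite /deg -sum1_card big_mkcond /=; apply: eq_bigr => v _.
by rewrite inE; case: (g u v).
Qed.
Import Order.TTheory GRing.Theory Num.Theory.


Lemma handshake (T : finType) (g : rel T) : simple_graph g ->
  (2 * nedges g = \sum_v deg g v)%N.
Proof.
move=> [gs gi].
have -> : \sum_v deg g v = \sum_(p : T * T | g p.1 p.2) 1%N.
  rewrite (eq_bigr (fun v => \sum_u (g v u : nat))); last by move=> v _; rewrite deg_sum.
  rewrite pair_bigA /= [RHS]big_mkcond /=; apply: eq_bigr => p _.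
  by case: (g p.1 p.2).
rewrite (partition_big (fun p => [set p.1; p.2]) (mem (edges g))); last first.
  move=> [a b] /= gab; rewrite inE; apply/existsP; exists a; apply/existsP; exists b.
  by rewrite gab eqxx.
rewrite /nedges mulnC -sum_nat_const; apply: eq_bigr => E.
rewrite inE => /existsP [x /existsP [y /andP [gxy /eqP ->]]].
have xy : x != y by apply/eqP => e; rewrite e gi in gxy.
rewrite (eq_bigl (pred2 (x, y) (y, x))).
  by rewrite sum1_card card2 xpair_eqE (negbTE xy).
move=> [a b] /=; rewrite !xpair_eqE.
apply/idP/idP.
  move=> /andP [gab /eqP e].
  have ab : a != b by apply/eqP => e'; rewrite e' gi in gab.
  have : a \in [set x; y] by rewrite -e !inE eqxx.
  have : b \in [set x; y] by rewrite -e !inE eqxx orbT.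
  rewrite !inE => /orP [] /eqP ebx /orP [] /eqP eay; subst; rewrite ?eqxx ?orbT //=.
  - by rewrite eqxx in ab.
  - by rewrite eqxx in ab.
move=> /orP [] /andP [/eqP -> /eqP ->]; first by rewrite gxy eqxx.
by rewrite gs gxy setUC eqxx.
Qed.


Section G.
Variables (T : finType) (h : rel T).
Hypothesis hsym : symmetric h.
Hypothesis hirr : irreflexive h.

Definition pc (A B : {set T}) : nat := \sum_(u in A) \sum_(v in B) h u v.


Lemma pc_sym (A B : {set T}) : pc A B = pc B A.
Proof.
rewrite /pc exchange_big /=; apply: eq_bigr => u _; apply: eq_bigr => v _.
by rewrite hsym.
Qed.

Lemma deg_split (C : {set T}) : \sum_(u in C) deg h u = (pc C C + pc C (~: C))%N.
Proof.
rewrite /pc -big_split /=; apply: eq_bigr => u _.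
rewrite deg_sum (bigID (mem C)) /=; congr (_ + _)%N.
by apply: eq_bigl => v; rewrite inE.
Qed.

Definition rk (x : T) : nat := enum_rank x.

Lemma rk_inj : injective rk.
Proof. by move=> x y /ord_inj /enum_rank_inj. Qed.

Definition lt (A : {set T}) : nat :=
  \sum_(u in A) \sum_(v in A) (h u v && (rk v < rk u)%N).

Lemma pc_lt (A : {set T}) : pc A A = (lt A + lt A)%N.
Proof.
have -> : pc A A = (lt A + \sum_(u in A) \sum_(v in A) (h u v && (rk u < rk v)%N))%N.
  rewrite /pc /lt -big_split /=; apply: eq_bigr => u _.
  rewrite -big_split /=; apply: eq_bigr => v _.
  case huv: (h u v) => //=.
  case: (ltngtP (rk u) (rk v)) => // /rk_inj e.
  by rewrite e hirr in huv.
congr (_ + _)%N; rewrite exchange_big /=; apply: eq_bigr => u _.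
by apply: eq_bigr => v _; rewrite hsym.
Qed.

Definition Bs (A : {set T}) : {set T} :=
  [set x in A | [forall y in A, h x y ==> (rk x < rk y)%N]].

Lemma Bs_indep (A : {set T}) : independent h (Bs A).
Proof.
apply/forallP => x; apply/implyP => xB; apply/forallP => y; apply/implyP => yB.
apply/negP => hxy.
move: xB yB; rewrite !inE => /andP [xA /forall_inP Hx] /andP [yA /forall_inP Hy].
have := Hx y yA; have := Hy x xA; rewrite hxy hsym hxy /= => a b.
by move: (ltn_trans a b); rewrite ltnn.
Qed.

Lemma card_le_Bs (A : {set T}) : (#|A| <= #|Bs A| + lt A)%N.
Proof.
rewrite -sum1_card /lt.
have -> : #|Bs A| = \sum_(u in Bs A) 1%N by rewrite sum1_card.
apply: (@leq_trans (\sum_(u in A) ((u \in Bs A) + \sum_(v in A) (h u v && (rk v < rk u)%N)))%N).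
  apply: leq_sum => u uA.
  case uB: (u \in Bs A) => //.
  move: uB; rewrite inE uA /= => /forall_inPn [y yA].
  rewrite negb_imply => /andP [huy].
  rewrite -leqNgt => hle.
  have hne : rk y != rk u.
    apply/eqP => /rk_inj e; by rewrite e hirr in huy.
  rewrite add0n (bigD1 y) //= huy /=.
  have -> : (rk y < rk u)%N by rewrite ltn_neqAle hne hle.
  by [].
rewrite big_split /= leq_add2r.
rewrite big_mkcond [X in (_ <= X)%N]big_mkcond /=.
apply: leq_sum => u _.
case uB: (u \in Bs A); last by case: (u \in A).
by move: uB; rewrite inE => /andP [-> _].
Qed.


Hypothesis h3 : forall v, deg h v = 3%N.
Hypothesis hind : forall A : {set T}, independent h A -> ((#|A|%:R : rat) <= delta_l * #|T|%:R)%R.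

Lemma alpha (A : {set T}) : (97 * (2 * #|A|) <= 94 * #|T| + 97 * pc A A)%N.
Proof.
have H1 := @hind _ (Bs_indep A).
move: H1; rewrite /delta_l mulrAC ler_pdivlMr // -!natrM ler_nat => H1.
have H2 := card_le_Bs A.
have H3 := pc_lt A.
move: H1 H2 H3; move: (#|Bs A|) (#|A|) (lt A) (pc A A) (#|T|) => b a l p n.
move=> /ssrnat.leP H1 /ssrnat.leP H2 H3; apply/ssrnat.leP.
rewrite -!plusE -!multE in H1 H2 H3 *; lia.
Qed.

Lemma reg (C : {set T}) : (pc C C + pc C (~: C) = 3 * #|C|)%N.
Proof.
rewrite -deg_split (eq_bigr (fun _ => 3%N)); last by move=> u _; rewrite h3.
by rewrite sum_nat_const mulnC.
Qed.


Lemma compl_simple : simple_graph (compl_graph h).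
Proof.
split.
  by move=> x y; rewrite /compl_graph eq_sym hsym.
by move=> x; rewrite /compl_graph eqxx.
Qed.

Lemma deg_c v : (deg (compl_graph h) v + 4 = #|T|)%N.
Proof.
rewrite /deg.
have -> : [set u | compl_graph h v u] = ~: (v |: [set u | h v u]).
  apply/setP => u; rewrite !inE /compl_graph negb_or eq_sym.
  by [].
have := cardsC (v |: [set u | h v u]); rewrite cardsU1 inE hirr.
have := h3 v; rewrite /deg => ->.
by rewrite addnC.
Qed.

Lemma adj_sum (C : {set T}) :
  (\sum_(u in C) \sum_(v in C) (compl_graph h u v : nat) + #|C| + pc C C = #|C| * #|C|)%N.
Proof.
have E1 : #|C| = \sum_(u in C) \sum_(v in C) (u == v : nat).
  rewrite -sum1_card; apply: eq_bigr => u uC.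
  rewrite (bigD1 u) //= eqxx big1 // => v /andP [_ ne].
  by rewrite eq_sym (negbTE ne).
have E2 : (#|C| * #|C| = \sum_(u in C) \sum_(v in C) 1)%N.
  rewrite -sum_nat_const; apply: eq_bigr => u _; by rewrite sum1_card.
rewrite {1}E1 E2 /pc -!big_split /=.
apply: eq_bigr => u _; rewrite -!big_split /=.
apply: eq_bigr => v _; rewrite /compl_graph.
case: (eqVneq u v) => [->|ne]; first by rewrite hirr.
by case: (h u v).
Qed.

Lemma core_C (C : {set T}) :
  (388*#|C|*#|C| <= 188*#|C|*#|T| + 97*#|T|*pc C C)%N.
Proof.
have H1 := alpha C.
have H2 := alpha (~: C).
have H3 := reg C.
have H4 := reg (~: C).
have H5 := pc_sym C (~: C).
have H6 := cardsC C.
rewrite -H6 in H1 H2 *.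
rewrite setCK in H4.
move: H1 H2 H3 H4 H5; move: (pc C C) (pc (~:C) (~:C)) (pc C (~:C)) (pc (~:C) C) #|C| #|~: C|.
move=> P Q c1 c2 k r /ssrnat.leP H1 /ssrnat.leP H2 H3 H4 H5.
apply/ssrnat.leP; rewrite -!plusE -!multE in H1 H2 H3 H4 H5 *.
apply: (@core_ineq _ _ _ Q) => //; lia.
Qed.

End G.

Local Open Scope ring_scope.
Lemma cst_gen (p c : rat) : c != 0 -> 4%:R * (p / c) - 1 = (4%:R * p - c) / c.
Proof. by move=> c0; rewrite mulrBl (divff c0) mulrA. Qed.

Lemma cst : 4%:R * delta_l - 1 = 182%:R / 194%:R :> rat.
Proof.
rewrite /delta_l cst_gen; last by rewrite pnatr_eq0.
by congr (_ / _).
Qed.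

Lemma addfrac (u v c : rat) : c != 0 -> u / c + v = (u + v * c) / c.
Proof. by move=> c0; rewrite mulrDl mulfK. Qed.

Lemma rat_step (X k a dd : nat) : (0 < a)%N ->
  (194*X*a <= 182*k*a + 194*(k*k)*dd)%N ->
  (a%:R)^-1 * (X%:R - dd%:R / a%:R *+ (k*k)) <= (4%:R*delta_l - 1) * k%:R / a%:R :> rat.
Proof.
move=> a0 H.
rewrite -[_ *+ (k*k)]mulr_natl mulrA.
have a0' : 0 < a%:R :> rat by rewrite ltr0n.
have a1 : a%:R != 0 :> rat by rewrite gt_eqF.
rewrite cst [X in X <= _]mulrC.
rewrite ler_pM2r; last by rewrite invr_gt0.
have -> : X%:R - (k*k)%:R * dd%:R / a%:R = (X%:R * a%:R - (k*k)%:R * dd%:R) / a%:R :> rat.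
  by rewrite mulrBl mulfK.
rewrite ler_pdivrMr; last by [].
rewrite lerBlDr -mulrA mulrAC.
have -> : 182%:R * (k%:R * a%:R) / 194%:R + (k*k)%:R * dd%:R = (182%:R * (k%:R * a%:R) + (k*k)%:R * dd%:R * 194%:R) / 194%:R :> rat.
  by apply: addfrac; rewrite gt_eqF // ltr0n.
rewrite ler_pdivlMr; last by rewrite ltr0n.
rewrite -!natrM -natrD ler_nat.
move: H.
move=> /ssrnat.leP H; apply/ssrnat.leP; rewrite -!plusE -!multE in H *; lia.
Qed.

Lemma frac_simpl (a x y : rat) : x != 0 -> a * x / (x * y) = a / y.
Proof. by move=> x0; rewrite invfM mulrA mulfK. Qed.

Theorem mainTheorem9 (T : finType) (h : rel T) :
  simple_graph h ->
  (forall v : T, deg h v = 3%N) ->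
  (4 < #|T|)%N ->
  (forall A : {set T}, independent h A -> (#|A|%:R : rat) <= delta_l * #|T|%:R) ->
  forall S : {set {set T}}, clustering S ->
    modularity (compl_graph h) S <= (4%:R * delta_l - 1) / (#|T|%:R - 4%:R).
Proof.
move=> [hs hi] h3 n4 hind S cS.
set G := compl_graph h.
have hd : forall v, deg G v = (#|T| - 4)%N.
  by move=> v; rewrite -(deg_c _ _ hi h3 v) addnK.
set d := (#|T| - 4)%N in hd *.
have dn : (d + 4)%N = #|T| by rewrite subnK // ltnW.
have hm : (2 * nedges G = #|T| * d)%N.
  rewrite handshake; last by apply: compl_simple _ _ hs.
  by rewrite (eq_bigr (fun _ => d)) ?sum_nat_const // => v _; rewrite hd.
have a0 : (0 < #|T| * d)%N by rewrite muln_gt0 subn_gt0 n4 andbT (ltn_trans _ n4).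
have key : forall C : {set T}, mod_cluster G C <= (4%:R * delta_l - 1) * #|C|%:R / (#|T| * d)%:R.
  move=> C; rewrite /mod_cluster hm.
  rewrite (eq_bigr (fun u => \sum_(v in C) adj G u v - ((d*d)%:R / (#|T|*d)%:R) *+ #|C|)); last first.
    move=> u _; rewrite sumrB; congr (_ - _).
    rewrite (eq_bigr (fun _ => (d*d)%:R / (#|T|*d)%:R)); first by rewrite sumr_const.
    by move=> v _; rewrite !hd !natrM.
  rewrite sumrB sumr_const -mulrnA /adj.
  under eq_bigr do rewrite -natr_sum.
  rewrite -natr_sum.
  apply: rat_step => //.
  have H1 := adj_sum _ _ hi C.
  have H2 := core_C _ _ hs hi h3 hind C.
  move: H1 H2 dn; move: (\sum_(i in C) \sum_(i0 in C) (G i i0 : nat))%N (pc _ h C C) #|C| #|T| => X P k n.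
  move=> H1 /ssrnat.leP H2 H3; apply/ssrnat.leP.
  rewrite -!plusE -!multE in H1 H2 H3 *.
  exact: nat_step H1 H3 H2.
rewrite /modularity.
apply: (le_trans (ler_sum _ (fun C _ => key C))).
rewrite -mulr_suml -mulr_sumr -natr_sum -(card_partition cS) cardsT natrM.
have nz : #|T|%:R != 0 :> rat by rewrite pnatr_eq0 -lt0n (ltn_trans _ n4).
rewrite (frac_simpl (4%:R * delta_l - 1) _ _ nz).
have e : #|T|%:R - 4%:R = d%:R :> rat by rewrite -dn natrD addrK.
rewrite e; exact: lexx.
Qed.
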